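(* There is an absolute constant $C>0$ such that for every $n\ge2$, all monotone non-decreasing subadditive valuations $v_1,\dots,v_n:[0,1]\to\mathbb R_{\ge0}$ and all budgets $B_1,\dots,B_n>0$, the final allocation $y$ of the Estimate-and-Price auction satisfies $\bar W(y)\ge\frac{1}{C\log^2 n}\bar W^*$.
   Context: Subadditive: $v_i(a+b)\le v_i(a)+v_i(b)$ whenever $a,b,a+b\in[0,1]$. One divisible good (the interval $[0,1]$), $n\ge2$ players. Let $\bar v_i(y)=\min\{v_i(y),B_i\}$ and $k=\lceil 8\log_2 n\rceil$. Liquid welfare: $\bar W(y)=\sum_i\min\{v_i(y_i),B_i\}$; $\bar W^*=\sup\{\bar W(y):y\in\mathbb R^n_{\ge0},\sum_iy_i=1\}$. Sell-Without-$r$ (for a player $r$): define $p:[0,\frac12]\to\mathbb R_{\ge0}$ by $p(t)=p_j=\frac{2^j}{8}\bar v_r(\frac12)$ for $t\in[\frac{j-1}{2k},\frac{j}{2k})$, $j=1,\dots,k$. The players other than $r$ are processed in a fixed arbitrary order; when player $i$'s turn comes, let $z_i$ be the total amount taken by earlier players; player $i$ takes $x_i\in[0,\frac12-z_i]$ maximizing $v_i(x_i)-\int_{z_i}^{z_i+x_i}p(t)\,dt$ subject to $\int_{z_i}^{z_i+x_i}p(t)\,dt\le B_i$, and pays $\pi_i=\int_{z_i}^{z_i+x_i}p(t)\,dt$. Estimate-and-Price: let $r_1=\arg\max_i\bar v_i(\frac12)$ and $r_2=\arg\max_{i\ne r_1}\bar v_i(\frac12)$ (fixed tie-breaking). Let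 $(x,\pi)$ be the outcome of Sell-Without-$r_1$ on players $[n]\setminus\{r_1\}$ and $(x',\pi')$ that of Sell-Without-$r_2$ on players $[n]\setminus\{r_2\}$. Each $i\ne r_1$ receives $x_i$ and pays $\pi_i$. Player $r_1$ receives $x'_{r_1}$ and pays $\pi'_{r_1}$ if $v_{r_1}(x'_{r_1})-\pi'_{r_1}\ge v_{r_1}(\frac12)-2\bar v_{r_2}(\frac12)$; otherwise he receives $\frac12$ and pays $2\bar v_{r_2}(\frac12)$. *)

(* Defs.v *)
From Stdlib Require Import Reals Lra Lia List.
Import ListNotations.
Open Scope R_scope.

(* Players are 0..n-1; valuation of player i is v i : R -> R (only values on
   [0,1] matter); budget of player i is B i. *)

Definition log2 (x : R) : R := ln x / ln 2.

(* ceiling of a real, as an integer: ceil x = - floor(-x), floor y = up y - 1 *)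
Definition ceilZ (x : R) : Z := (1 - up (- x))%Z.

Definition kk (n : nat) : nat := Z.to_nat (ceilZ (8 * log2 (INR n))).

Definition vbar (v : nat -> R -> R) (B : nat -> R) (i : nat) (y : R) : R :=
  Rmin (v i y) (B i).

Definition price_level (v : nat -> R -> R) (B : nat -> R) (r : nat) (j : nat) : R :=
  2 ^ j / 8 * vbar v B r (1/2).

(* The price function p(t) of Sell-Without-r: p(t) = p_j on [(j-1)/(2k), j/(2k)),
   j = 1..k (and 0 outside [0,1/2)). *)
Definition price_fun (v : nat -> R -> R) (B : nat -> R) (n r : nat) (t : R) : R :=
  let k := kk n in
  fold_right Rplus 0
    (map (fun j => if Rle_dec (INR (j - 1) / (2 * INR k)) t then
                     if Rlt_dec t (INR j / (2 * INR k)) then price_level v B r j else 0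
                   else 0)
         (seq 1 k)).

(* Cumulative price F(s) = \int_0^s p(t) dt, computed exactly for the step
   function p:  sum_j p_j * |[ (j-1)/(2k), j/(2k) ) \cap [0,s]|. *)
Definition cum_price (v : nat -> R -> R) (B : nat -> R) (n r : nat) (s : R) : R :=
  let k := kk n in
  fold_right Rplus 0
    (map (fun j => price_level v B r j *
                   Rmax 0 (Rmin s (INR j / (2 * INR k)) - INR (j - 1) / (2 * INR k)))
         (seq 1 k)).

Definition cost (v : nat -> R -> R) (B : nat -> R) (n r : nat) (z x : R) : R :=
  cum_price v B n r (z + x) - cum_price v B n r z.

Definition best_response (v : nat -> R -> R) (B : nat -> R) (n r i : nat) (z xi : R) : Prop :=
  0 <= xi <= 1/2 - z /\
  cost v B n r z xi <= B i /\
  (forall x', 0 <= x' <= 1/2 - z -> cost v B n r z x' <= B i ->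
     v i x' - cost v B n r z x' <= v i xi - cost v B n r z xi).

Fixpoint sell_run (v : nat -> R -> R) (B : nat -> R) (n r : nat)
    (x pi : nat -> R) (l : list nat) (z : R) : Prop :=
  match l with
  | [] => True
  | i :: l' =>
      best_response v B n r i z (x i) /\
      pi i = cost v B n r z (x i) /\
      sell_run v B n r x pi l' (z + x i)
  end.

(* (x, pi) is an outcome of Sell-Without-r on players [n] \ {r}, processed in the
   order given by the list ord (a permutation of 0..n-1, with r skipped). *)
Definition sell_without (v : nat -> R -> R) (B : nat -> R) (n : nat) (ord : list nat)
    (r : nat) (x pi : nat -> R) : Prop :=
  sell_run v B n r x pi (filter (fun i => negb (Nat.eqb i r)) ord) 0.

Definition ep_alloc (v : nat -> R -> R) (B : nat -> R) (r1 r2 : nat)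
    (x x' pi' : nat -> R) (i : nat) : R :=
  if Nat.eqb i r1 then
    (if Rle_dec (v r1 (1/2) - 2 * vbar v B r2 (1/2)) (v r1 (x' r1) - pi' r1)
     then x' r1 else 1/2)
  else x i.

Definition liquid_welfare (v : nat -> R -> R) (B : nat -> R) (n : nat) (y : nat -> R) : R :=
  fold_right Rplus 0 (map (fun i => vbar v B i (y i)) (seq 0 n)).

Definition feasible (n : nat) (y : nat -> R) : Prop :=
  (forall i, (i < n)%nat -> 0 <= y i) /\ fold_right Rplus 0 (map y (seq 0 n)) = 1.

(* the set of achievable liquid welfare values; \bar W^* is its supremum *)
Definition welfare_values (v : nat -> R -> R) (B : nat -> R) (n : nat) (w : R) : Prop :=
  exists y, feasible n y /\ w = liquid_welfare v B n y.

Definition valuation (f : R -> R) : Prop :=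
  (forall a, 0 <= a <= 1 -> 0 <= f a) /\
  (forall a b, 0 <= a -> a <= b -> b <= 1 -> f a <= f b) /\
  (forall a b, 0 <= a -> 0 <= b -> a + b <= 1 -> f (a + b) <= f a + f b).

(* Main.v *)
Require Import Defs.
From Stdlib Require Import Reals List Permutation.
From Stdlib Require Import ZArith Lra Lia.
Import ListNotations.
Open Scope R_scope.

Definition sumR (f : nat -> R) (l : list nat) : R := fold_right Rplus 0 (map f l).

Lemma sumR_cons f a l : sumR f (a::l) = f a + sumR f l.
Proof. reflexivity. Qed.

Lemma sumR_nil f : sumR f [] = 0.
Proof. reflexivity. Qed.

Lemma sumR_app f l1 l2 : sumR f (l1++l2) = sumR f l1 + sumR f l2.
Proof. induction l1 as [|a l1 IH]; simpl; [unfold sumR; simpl; ring|].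
  rewrite !sumR_cons, IH; ring. Qed.

Lemma sumR_le f g l : (forall x, In x l -> f x <= g x) -> sumR f l <= sumR g l.
Proof. induction l as [|a l IH]; intros H; [unfold sumR; simpl; lra|].
  rewrite !sumR_cons. assert (f a <= g a) by (apply H; left; auto).
  assert (sumR f l <= sumR g l) by (apply IH; intros; apply H; right; auto). lra. Qed.

Lemma sumR_ext f g l : (forall x, In x l -> f x = g x) -> sumR f l = sumR g l.
Proof. intros H. apply Rle_antisym; apply sumR_le; intros x Hx; rewrite (H x Hx); lra. Qed.

Lemma sumR_plus f g l : sumR (fun x => f x + g x) l = sumR f l + sumR g l.
Proof. induction l as [|a l IH]; [unfold sumR; simpl; ring|]. rewrite !sumR_cons, IH; ring. Qed.

Lemma sumR_minus f g l : sumR (fun x => f x - g x) l = sumR f l - sumR g l.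
Proof. induction l as [|a l IH]; [unfold sumR; simpl; ring|]. rewrite !sumR_cons, IH; ring. Qed.

Lemma sumR_scal c f l : sumR (fun x => c * f x) l = c * sumR f l.
Proof. induction l as [|a l IH]; [unfold sumR; simpl; ring|]. rewrite !sumR_cons, IH; ring. Qed.

Lemma sumR_nonneg f l : (forall x, In x l -> 0 <= f x) -> 0 <= sumR f l.
Proof. intros H. replace 0 with (sumR (fun _ => 0) l).
  - apply sumR_le; auto.
  - induction l as [|a l IH]; [reflexivity|]. rewrite sumR_cons, IH; [ring|].
    intros; apply H; right; auto. Qed.

Lemma sumR_term f l a : (forall x, In x l -> 0 <= f x) -> In a l -> f a <= sumR f l.
Proof. induction l as [|b l IH]; intros H Ha; [destruct Ha|]. rewrite sumR_cons.
  destruct Ha as [<-|Ha].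
  - assert (0 <= sumR f l) by (apply sumR_nonneg; intros; apply H; right; auto). lra.
  - assert (0 <= f b) by (apply H; left; auto).
    assert (f a <= sumR f l) by (apply IH; auto; intros; apply H; right; auto). lra. Qed.

Lemma sumR_perm f l1 l2 : Permutation l1 l2 -> sumR f l1 = sumR f l2.
Proof. induction 1; rewrite ?sumR_cons; try lra. Qed.

Lemma sumR_const c l : sumR (fun _ => c) l = INR (length l) * c.
Proof. induction l as [|a l IH]; [unfold sumR; simpl; ring|]. rewrite sumR_cons, IH.
  simpl length. rewrite S_INR. ring. Qed.

Lemma filter_notin r l : ~ In r l -> filter (fun i => negb (Nat.eqb i r)) l = l.
Proof. induction l as [|a l IH]; intros H; simpl; auto.
  destruct (Nat.eqb_spec a r) as [->|Hne]; [exfalso; apply H; left; auto|].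
  simpl. rewrite IH; auto. intro; apply H; right; auto. Qed.

Lemma sumR_split f l r : NoDup l -> In r l ->
  sumR f l = f r + sumR f (filter (fun i => negb (Nat.eqb i r)) l).
Proof. induction l as [|a l IH]; intros Hnd Hin; [destruct Hin|].
  apply NoDup_cons_iff in Hnd as [Hna Hnd]. simpl.
  destruct (Nat.eqb_spec a r) as [->|Hne]; simpl.
  - rewrite filter_notin; auto.
  - destruct Hin as [->|Hin]; [congruence|]. rewrite !sumR_cons, IH; auto. ring. Qed.

Lemma Permutation_filter' (p : nat -> bool) l1 l2 :
  Permutation l1 l2 -> Permutation (filter p l1) (filter p l2).
Proof. induction 1; simpl; auto.
  - destruct (p x); auto.
  - destruct (p x), (p y); auto. apply perm_swap.
  - eapply perm_trans; eauto. Qed.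

Definition dd (k : nat) : R := / (2 * INR k).
Definition cc (k j : nat) (s : R) : R :=
  Rmax 0 (Rmin s (INR j * dd k) - INR (j - 1) * dd k).
Definition Fg (k : nat) (pr : nat -> R) (s : R) : R :=
  sumR (fun j => pr j * cc k j s) (seq 1 k).

Lemma cum_eq v B n r s : cum_price v B n r s = Fg (kk n) (price_level v B r) s.
Proof. reflexivity. Qed.

Section CC.
Variable k : nat.
Hypothesis Dpos : 0 < dd k.

Lemma cc_nonneg j s : 0 <= cc k j s.
Proof. unfold cc. apply Rmax_l. Qed.

Lemma cc_S j s : cc k (S j) s = Rmax 0 (Rmin s (INR j * dd k + dd k) - INR j * dd k).
Proof. unfold cc. rewrite S_INR. simpl (S j - 1)%nat. rewrite Nat.sub_0_r. f_equal. f_equal. f_equal. ring. Qed.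

Lemma INRj_nonneg j : 0 <= INR j * dd k.
Proof. apply Rmult_le_pos; [apply pos_INR| lra]. Qed.

Lemma cc_mono j s z : s <= z -> cc k j s <= cc k j z.
Proof. intros H. destruct j as [|j].
  - unfold cc. simpl. unfold Rmax, Rmin; repeat destruct Rle_dec; lra.
  - rewrite !cc_S. unfold Rmax, Rmin; repeat destruct Rle_dec; lra. Qed.

Lemma cc_zero j s : (1 <= j)%nat -> s <= INR (j - 1) * dd k -> cc k j s = 0.
Proof. intros Hj H. destruct j as [|j]; [lia|]. rewrite cc_S.
  simpl (S j - 1)%nat in H. rewrite Nat.sub_0_r in H.
  unfold Rmax, Rmin; repeat destruct Rle_dec; lra. Qed.

Lemma cc_half m s : (1 <= m)%nat -> INR m * dd k - dd k / 2 <= s -> dd k / 2 <= cc k m s.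
Proof. intros Hm H. destruct m as [|m]; [lia|]. rewrite cc_S. rewrite S_INR in H.
  assert (INR m * dd k + dd k = (INR m + 1) * dd k) by ring.
  unfold Rmax, Rmin; repeat destruct Rle_dec; lra. Qed.

Lemma cc_sum m s : 0 <= s -> sumR (fun j => cc k j s) (seq 1 m) = Rmin s (INR m * dd k).
Proof. intros Hs. induction m as [|m IH].
  - simpl. unfold sumR; simpl. rewrite Rmult_0_l. unfold Rmin; destruct Rle_dec; lra.
  - rewrite seq_S, sumR_app, IH. replace (1 + m)%nat with (S m) by lia.
    rewrite sumR_cons, sumR_nil, cc_S. rewrite S_INR.
    assert (INR m * dd k + dd k = (INR m + 1) * dd k) by ring.
    pose proof (INRj_nonneg m).
    unfold Rmax, Rmin; repeat destruct Rle_dec; lra. Qed.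

Variable pr : nat -> R.
Hypothesis prpos : forall j, 0 <= pr j.

Lemma Fg_mono z s : z <= s -> Fg k pr z <= Fg k pr s.
Proof. intros H. unfold Fg. apply sumR_le. intros j _.
  apply Rmult_le_compat_l; auto. apply cc_mono; auto. Qed.

Lemma Fg_nonneg s : 0 <= Fg k pr s.
Proof. unfold Fg. apply sumR_nonneg. intros j _. apply Rmult_le_pos; auto. apply cc_nonneg. Qed.

Lemma Fg_zero : Fg k pr 0 = 0.
Proof. unfold Fg. rewrite (sumR_ext _ (fun _ => 0)).
  - rewrite sumR_const; ring.
  - intros j Hj. apply in_seq in Hj. rewrite cc_zero; [ring|lia|].
    apply Rmult_le_pos; [apply pos_INR|lra]. Qed.

Lemma Fg_term m s : In m (seq 1 k) -> pr m * cc k m s <= Fg k pr s.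
Proof. intros Hm. unfold Fg. apply (sumR_term (fun j => pr j * cc k j s)); auto.
  intros. apply Rmult_le_pos; auto. apply cc_nonneg. Qed.

Lemma Fg_cost z a P : 0 <= z -> 0 <= a -> 0 <= P ->
  (forall j, In j (seq 1 k) -> INR (j - 1) * dd k < z + a -> pr j <= P) ->
  Fg k pr (z + a) - Fg k pr z <= P * a.
Proof. intros Hz Ha HP Hj. unfold Fg. rewrite <- sumR_minus.
  apply Rle_trans with (sumR (fun j => P * (cc k j (z+a) - cc k j z)) (seq 1 k)).
  - apply sumR_le. intros j Hin.
    assert (cc k j z <= cc k j (z+a)) by (apply cc_mono; lra).
    destruct (Rlt_dec (INR (j - 1) * dd k) (z + a)) as [Hlt|Hge].
    + pose proof (Hj j Hin Hlt).
      replace (pr j * cc k j (z + a) - pr j * cc k j z) with (pr j * (cc k j (z + a) - cc k j z)) by ring.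
      apply Rmult_le_compat_r; lra.
    + apply in_seq in Hin. rewrite !(cc_zero j); try lia; try lra.
  - rewrite sumR_scal, sumR_minus, !cc_sum by lra. apply Rmult_le_compat_l; auto.
    unfold Rmin; repeat destruct Rle_dec; lra. Qed.

Lemma Fg_costpos z a : 0 <= a -> 0 <= Fg k pr (z + a) - Fg k pr z.
Proof. intros. pose proof (Fg_mono z (z+a)). lra. Qed.

End CC.

Fixpoint zend (x : nat -> R) (l : list nat) (z : R) : R :=
  match l with [] => z | i :: l' => zend x l' (z + x i) end.

Section Run.
Variables (v : nat -> R -> R) (B : nat -> R) (n r : nat) (x pi : nat -> R).

Lemma run_bounds l : forall z, sell_run v B n r x pi l z -> z <= 1/2 -> z <= zend x l z <= 1/2.
Proof. induction l as [|a l IH]; intros z H Hz; simpl; [lra|].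
  destruct H as [[Hx _] [_ H]]. pose proof (IH _ H). lra. Qed.

Lemma run_mem l : forall z, sell_run v B n r x pi l z -> 0 <= z -> z <= 1/2 ->
  forall i, In i l -> exists zi, 0 <= zi /\ zi <= zend x l z /\
    best_response v B n r i zi (x i) /\ pi i = cost v B n r zi (x i).
Proof. induction l as [|a l IH]; intros z H Hz0 Hz i Hi; [destruct Hi|].
  destruct H as [Hbr [Hpi H]]. pose proof Hbr as [Hx _].
  destruct Hi as [<-|Hi].
  - exists z. pose proof (run_bounds l (z + x a) H ltac:(lra)). simpl. split; [lra|]. split; [lra|]. split; auto.
  - destruct (IH (z + x a) H ltac:(lra) ltac:(lra) i Hi) as [zi Hzi]. exists zi. simpl. exact Hzi. Qed.

Lemma run_rev l : forall z, sell_run v B n r x pi l z ->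
  sumR pi l = cum_price v B n r (zend x l z) - cum_price v B n r z.
Proof. induction l as [|a l IH]; intros z H; simpl; [unfold sumR; simpl; ring|].
  destruct H as [_ [Hpi H]]. rewrite sumR_cons, (IH _ H), Hpi. unfold cost. ring. Qed.

Lemma BR_facts i zi xi : best_response v B n r i zi xi -> valuation (v i) ->
  (forall a, 0 <= a -> 0 <= cost v B n r zi a) ->
  cost v B n r zi xi <= vbar v B i xi /\
  forall a, 0 <= a <= 1/2 - zi -> vbar v B i a <= vbar v B i xi + cost v B n r zi a.
Proof. intros [Hx [Hb Hu]] [Hv0 _] Hc.
  assert (Hc0 : cost v B n r zi 0 = 0) by (unfold cost; rewrite Rplus_0_r; ring).
  pose proof (Hc xi ltac:(lra)) as Hcx.   assert (H00 : 0 <= 0 <= 1/2 - zi) by lra. assert (H01 : cost v B n r zi 0 <= B i) by (rewrite Hc0; lra).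
  pose proof (Hu 0 H00 H01) as H0. rewrite Hc0 in H0.
  pose proof (Hv0 0 ltac:(lra)). pose proof (Hc xi ltac:(lra)).
  unfold vbar. split.
  - unfold Rmin; destruct Rle_dec; lra.
  - intros a Ha. pose proof (Hc a ltac:(lra)).
    destruct (Rle_dec (cost v B n r zi a) (B i)) as [Hle|Hgt].
    + pose proof (Hu a Ha Hle). unfold Rmin; repeat destruct Rle_dec; lra.
    + unfold Rmin; repeat destruct Rle_dec; lra. Qed.

End Run.

Lemma val_chunk f : valuation f -> forall N s, 0 <= s -> INR (S N) * s <= 1 ->
  f (INR (S N) * s) <= INR (S N) * f s.
Proof. intros [Hp [Hm Hs]]. induction N as [|N IH]; intros s Hs0 H.
  - simpl. rewrite !Rmult_1_l. lra.
  - rewrite (S_INR (S N)) in *. pose proof (pos_INR (S N)).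
    assert (H2 : 0 <= INR (S N) * s) by (apply Rmult_le_pos; lra).
    assert (H0x : INR (S N) * s <= 1) by nra.
    replace ((INR (S N) + 1) * s) with (INR (S N) * s + s) by ring.
    pose proof (Hs (INR (S N) * s) s H2 Hs0 ltac:(nra)).
    pose proof (IH s Hs0 H0x). lra. Qed.

Lemma vbar_chunk v B i N s : valuation (v i) -> 0 < B i -> 0 <= s -> INR (S N) * s <= 1 ->
  vbar v B i (INR (S N) * s) <= INR (S N) * vbar v B i s.
Proof. intros Hv HB Hs H. pose proof (val_chunk _ Hv N s Hs H).
  destruct Hv as [Hp _]. assert (INR (S N) * s <= 1) by auto.
  assert (s <= 1). { rewrite S_INR in H. pose proof (pos_INR N). nra. }
  pose proof (Hp s ltac:(lra)). pose proof (pos_INR N). rewrite S_INR in *.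
  unfold vbar, Rmin. repeat destruct Rle_dec; nra. Qed.

Lemma vbar_two v B i y : valuation (v i) -> 0 < B i -> 0 <= y <= 1 ->
  vbar v B i y <= 2 * vbar v B i (1/2).
Proof. intros [Hp [Hm Hs]] HB Hy. pose proof (Hp (1/2) ltac:(lra)).
  assert (v i y <= 2 * v i (1/2)).
  { destruct (Rle_dec y (1/2)).
    - pose proof (Hm y (1/2) ltac:(lra) r ltac:(lra)). pose proof (Hp y Hy). lra.
    - replace y with (1/2 + (y - 1/2)) by ring.
      pose proof (Hs (1/2) (y - 1/2) ltac:(lra) ltac:(lra) ltac:(lra)).
      pose proof (Hm (y - 1/2) (1/2) ltac:(lra) ltac:(lra) ltac:(lra)). lra. }
  unfold vbar, Rmin. repeat destruct Rle_dec; lra. Qed.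

Lemma vbar_nonneg v B i y : valuation (v i) -> 0 < B i -> 0 <= y <= 1 -> 0 <= vbar v B i y.
Proof. intros [Hp _] HB Hy. pose proof (Hp y Hy). unfold vbar, Rmin; destruct Rle_dec; lra. Qed.

Lemma chunk_exists y t : 0 <= y <= 1 -> 0 < t <= 1 ->
  exists N, INR (S N) <= 2 / t /\ y <= INR (S N) * t.
Proof. intros Hy Ht. destruct (Rle_dec y t).
  - exists 0%nat. simpl. split; [|lra]. apply Rmult_le_reg_r with t; [lra|].
    unfold Rdiv. rewrite Rmult_assoc, Rinv_l by lra. lra.
  - destruct (archimed (y / t)) as [H1 H2].
    assert (Hyt : 1 < y / t). { apply Rmult_lt_reg_r with t; [lra|].
      unfold Rdiv. rewrite Rmult_assoc, Rinv_l by lra. lra. }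
    assert (Hup : (0 < up (y / t))%Z). { apply lt_IZR. lra. }
    exists (Z.to_nat (up (y/t)) - 1)%nat.
    assert (HE : INR (S (Z.to_nat (up (y / t)) - 1)) = IZR (up (y / t))).
    { replace (S (Z.to_nat (up (y / t)) - 1)) with (Z.to_nat (up (y / t))) by lia.
      rewrite INR_IZR_INZ, Z2Nat.id; auto; lia. }
    rewrite HE. split.
    + assert (y / t <= 1 / t). { unfold Rdiv. apply Rmult_le_compat_r; [apply Rlt_le, Rinv_0_lt_compat; lra|lra]. }
      unfold Rdiv in *. lra.
    + assert (y = (y / t) * t) by (field; lra). nra. Qed.

Lemma log_facts n : (2 <= n)%nat ->
  1 <= log2 (INR n) /\ 8 * log2 (INR n) <= INR (kk n) /\ INR (kk n) < 8 * log2 (INR n) + 1.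
Proof. intros Hn. pose proof ln_lt_2 as Hl2.
  assert (Hn2 : 2 <= INR n) by (apply (le_INR 2) in Hn; simpl in Hn; lra).
  assert (Hln : ln 2 <= ln (INR n)).
  { destruct (Req_dec (INR n) 2) as [->|Hne]; [lra|]. left; apply ln_increasing; lra. }
  assert (HL : 1 <= log2 (INR n)).
  { unfold log2, Rdiv. apply Rle_trans with (ln 2 * / ln 2).
    - rewrite Rinv_r; lra.
    - apply Rmult_le_compat_r; [left; apply Rinv_0_lt_compat; lra|lra]. }
  split; auto. unfold kk, ceilZ.
  set (L := log2 (INR n)) in *.
  destruct (archimed (- (8 * L))) as [H1 H2].
  assert (Hc : (0 <= 1 - up (- (8 * L)))%Z).
  { apply le_IZR. rewrite minus_IZR. simpl. lra. }
  rewrite INR_IZR_INZ, Z2Nat.id by exact Hc. rewrite minus_IZR. simpl. lra. Qed.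

Lemma pow_fact n : (2 <= n)%nat -> INR n <= 2 ^ kk n.
Proof. intros Hn. destruct (log_facts n Hn) as [HL [Hk _]].
  pose proof ln_lt_2 as Hl2.
  assert (Hn2 : 2 <= INR n) by (apply (le_INR 2) in Hn; simpl in Hn; lra).
  destruct (Rle_dec (INR n) (2 ^ kk n)) as [H|H]; auto. exfalso.
  apply Rnot_le_lt in H. apply ln_increasing in H; [|apply pow_lt; lra].
  rewrite ln_pow in H by lra.
  assert (ln (INR n) = log2 (INR n) * ln 2) by (unfold log2; field; lra).
  nra. Qed.

Lemma price_nonneg v B r j : 0 <= vbar v B r (1/2) -> 0 <= price_level v B r j.
Proof. intros H. unfold price_level. apply Rmult_le_pos; auto.
  unfold Rdiv. apply Rmult_le_pos; [apply pow_le; lra|lra]. Qed.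

Lemma price_1 v B r : price_level v B r 1 = vbar v B r (1/2) / 4.
Proof. unfold price_level. simpl. field. Qed.

Lemma price_S v B r j : price_level v B r (S j) = 2 * price_level v B r j.
Proof. unfold price_level. simpl. field. Qed.



Section Main.
Variables (n : nat) (v : nat -> R -> R) (B : nat -> R).
Hypothesis Hn : (2 <= n)%nat.
Hypothesis Hval : forall i, (i < n)%nat -> valuation (v i).
Hypothesis HB : forall i, (i < n)%nat -> 0 < B i.
Variables (ord : list nat) (r1 r2 : nat) (x pi x' pi' : nat -> R).
Hypothesis Hperm : Permutation ord (seq 0 n).
Hypothesis Hr1 : (r1 < n)%nat.
Hypothesis Hmax1 : forall i, (i < n)%nat -> vbar v B i (1/2) <= vbar v B r1 (1/2).
Hypothesis Hr2 : (r2 < n)%nat.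
Hypothesis Hne : r2 <> r1.
Hypothesis Hmax2 : forall i, (i < n)%nat -> i <> r1 -> vbar v B i (1/2) <= vbar v B r2 (1/2).
Hypothesis Hs1 : sell_without v B n ord r1 x pi.
Hypothesis Hs2 : sell_without v B n ord r2 x' pi'.

Lemma mem_filter r i : In i (filter (fun i => negb (Nat.eqb i r)) ord) <-> (i < n)%nat /\ i <> r.
Proof. rewrite filter_In. split.
  - intros [Hi He]. apply (Permutation_in _ Hperm) in Hi. apply in_seq in Hi. split; [lia|].
    intro; subst; rewrite Nat.eqb_refl in He; discriminate.
  - intros [Hi He]. split.
    + apply (Permutation_in _ (Permutation_sym Hperm)). apply in_seq; lia.
    + apply Nat.eqb_neq in He; rewrite He; reflexivity. Qed.

Lemma Dpos : 0 < dd (kk n).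
Proof. destruct (log_facts n Hn) as [HL [Hk _]]. unfold dd. apply Rinv_0_lt_compat. lra. Qed.

Lemma costpos r : 0 <= vbar v B r (1/2) -> forall z a, 0 <= a -> 0 <= cost v B n r z a.
Proof. intros HV z a Ha. unfold cost. rewrite !cum_eq. apply Fg_costpos; auto.
  apply Dpos. intros; apply price_nonneg; auto. Qed.

Lemma run_player r (x0 pi0 : nat -> R) :
  0 <= vbar v B r (1/2) -> sell_without v B n ord r x0 pi0 ->
  forall i, (i < n)%nat -> i <> r -> exists zi, 0 <= zi /\
   zi <= zend x0 (filter (fun i => negb (Nat.eqb i r)) ord) 0 /\
   0 <= x0 i <= 1/2 /\ pi0 i = cost v B n r zi (x0 i) /\
   cost v B n r zi (x0 i) <= vbar v B i (x0 i) /\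
   (forall a, 0 <= a <= 1/2 - zi -> vbar v B i a <= vbar v B i (x0 i) + cost v B n r zi a) /\
   best_response v B n r i zi (x0 i).
Proof. intros HV Hs i Hi Hir. unfold sell_without in Hs.
  destruct (run_mem v B n r x0 pi0 _ 0 Hs ltac:(lra) ltac:(lra) i (proj2 (mem_filter r i) (conj Hi Hir)))
    as [zi [Hz0 [Hz1 [Hbr Hpi]]]].
  destruct (BR_facts v B n r i zi (x0 i) Hbr (Hval i Hi) (costpos r HV zi)) as [Hp Hu].
  exists zi. pose proof Hbr as [Hx _]. split; [lra|]. split; [lra|]. split; [lra|]. auto. Qed.


Let k := kk n.
Let D := dd k.
Let V := vbar v B r1 (1/2).
Let V2 := vbar v B r2 (1/2).
Let l1 := filter (fun i => negb (Nat.eqb i r1)) ord.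
Let Z := zend x l1 0.
Let pr := price_level v B r1.
Let R := Fg k pr Z.
Let Ao := sumR (fun i => vbar v B i (x i)) l1.
Let A := liquid_welfare v B n (ep_alloc v B r1 r2 x x' pi').

Lemma basic : 1 <= INR k /\ 2 * INR k * D = 1 /\ 0 < D /\ D <= 1/2 /\ 0 <= V /\ 0 <= V2 /\ V2 <= B r2.
Proof. destruct (log_facts n Hn) as [HL [Hk _]]. fold k in Hk.
  assert (1 <= INR k) by lra.
  assert (HD : 2 * INR k * D = 1) by (unfold D, dd; field; lra).
  pose proof Dpos as HDp. fold k D in HDp.
  split; auto. split; auto. split; auto. split; [nra|].
  assert (0 <= V) by (apply vbar_nonneg; auto; lra).
  assert (0 <= V2) by (apply vbar_nonneg; auto; lra).
  split; auto. split; auto. unfold V2, vbar. apply Rmin_r. Qed.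

Lemma prpos j : 0 <= pr j.
Proof. apply price_nonneg. destruct basic as [_ [_ [_ [_ [H _]]]]]. exact H. Qed.

Lemma Zbounds : 0 <= Z <= 1/2.
Proof. unfold sell_without in Hs1. fold l1 in Hs1. pose proof (run_bounds v B n r1 x pi l1 0 Hs1 ltac:(lra)). unfold Z. lra. Qed.

Lemma R_le_Ao : 0 <= R /\ R <= Ao /\ 0 <= Ao.
Proof. destruct basic as [_ [_ [HDp _]]].
  split. { apply Fg_nonneg; auto. apply prpos. }
  unfold sell_without in Hs1. fold l1 in Hs1. pose proof (run_rev v B n r1 x pi l1 0 Hs1) as Hr.
  rewrite !cum_eq in Hr. fold k pr in Hr. rewrite Fg_zero in Hr by (auto; apply prpos). fold Z in Hr.
  assert (Hx : forall i, In i l1 -> exists zi, 0 <= zi /\ zi <= Z /\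
   0 <= x i <= 1/2 /\ pi i = cost v B n r1 zi (x i) /\
   cost v B n r1 zi (x i) <= vbar v B i (x i) /\
   (forall a, 0 <= a <= 1/2 - zi -> vbar v B i a <= vbar v B i (x i) + cost v B n r1 zi a) /\
   best_response v B n r1 i zi (x i)).
  { intros i Hi. apply mem_filter in Hi as [Hi Hir]. apply (run_player r1 x pi); auto.
    apply (vbar_nonneg v B r1); auto; lra. }
  split.
  - unfold R. rewrite <- (Rminus_0_r (Fg k pr Z)). rewrite <- Hr. unfold Ao. apply sumR_le.
    intros i Hi. destruct (Hx i Hi) as [zi H]. lra.
  - unfold Ao. apply sumR_nonneg. intros i Hi. destruct (Hx i Hi) as [zi H].
    apply mem_filter in Hi as [Hi _]. apply vbar_nonneg; auto; lra. Qed.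

Lemma player1 i : In i l1 -> exists zi, 0 <= zi /\ zi <= Z /\
   0 <= x i <= 1/2 /\ pi i = cost v B n r1 zi (x i) /\
   cost v B n r1 zi (x i) <= vbar v B i (x i) /\
   (forall a, 0 <= a <= 1/2 - zi -> vbar v B i a <= vbar v B i (x i) + cost v B n r1 zi a) /\
   best_response v B n r1 i zi (x i).
Proof. intros Hi. apply mem_filter in Hi as [Hi Hir]. apply (run_player r1 x pi); auto.
  apply (vbar_nonneg v B r1); auto; lra. Qed.

Lemma lw_eq y : liquid_welfare v B n y = sumR (fun i => vbar v B i (y i)) (seq 0 n).
Proof. reflexivity. Qed.

Lemma perm_l1 : Permutation (filter (fun i => negb (Nat.eqb i r1)) (seq 0 n)) l1.
Proof. apply Permutation_sym, Permutation_filter', Hperm. Qed.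

Lemma split_seq f : sumR f (seq 0 n) = f r1 + sumR f l1.
Proof. rewrite (sumR_split f (seq 0 n) r1); [|apply seq_NoDup|apply in_seq; lia].
  rewrite (sumR_perm _ _ _ perm_l1). reflexivity. Qed.

Lemma A_eq : A = vbar v B r1 (ep_alloc v B r1 r2 x x' pi' r1) + Ao.
Proof. unfold A. rewrite lw_eq, split_seq. f_equal. unfold Ao. apply sumR_ext.
  intros i Hi. apply mem_filter in Hi as [_ Hir]. unfold ep_alloc.
  apply Nat.eqb_neq in Hir. rewrite Hir. reflexivity. Qed.

Lemma ep_r1_range : 0 <= ep_alloc v B r1 r2 x x' pi' r1 <= 1.
Proof. destruct basic as [_ [_ [_ [_ [_ [HV2 _]]]]]].
  destruct (run_player r2 x' pi' HV2 Hs2 r1 Hr1 (not_eq_sym Hne)) as [z [_ [_ [Hx _]]]].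
  unfold ep_alloc. rewrite Nat.eqb_refl. destruct Rle_dec; lra. Qed.

Lemma A_ge : vbar v B r1 (ep_alloc v B r1 r2 x x' pi' r1) <= A /\ Ao <= A /\ 0 <= A.
Proof. pose proof A_eq. pose proof R_le_Ao. pose proof ep_r1_range.
  assert (0 <= vbar v B r1 (ep_alloc v B r1 r2 x x' pi' r1)) by (apply vbar_nonneg; auto).
  lra. Qed.

Lemma key1 : V <= 16 * INR k * A.
Proof. destruct basic as [Hk1 [HD [HDp [HDle [HV [HV2 HV2B]]]]]].
  assert (Hkn : (1 <= k)%nat) by (apply INR_le; simpl; lra).
  pose proof A_ge as [HA1 [HA2 HA3]]. pose proof R_le_Ao as [HR0 [HR1 HR2]].
  destruct (Rle_dec (4 * V2) V) as [Hc|Hc].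
  - assert (V / 2 <= vbar v B r1 (ep_alloc v B r1 r2 x x' pi' r1)).
    { destruct (run_player r2 x' pi' HV2 Hs2 r1 Hr1 (not_eq_sym Hne)) as [z [Hz [_ [Hx [Hpi _]]]]].
      assert (Hc0 : 0 <= pi' r1) by (rewrite Hpi; apply costpos; auto; lra).
      unfold ep_alloc. rewrite Nat.eqb_refl. destruct Rle_dec as [Hl|Hl].
      - unfold vbar at 1. apply Rmin_glb.
        + assert (V <= v r1 (1/2)) by apply Rmin_l. fold V2 in Hl. lra.
        + assert (V <= B r1) by apply Rmin_r. lra.
      - fold V. lra. }
    nra.
  - apply Rnot_le_lt in Hc.
    assert (V * D / 8 <= A).
    { assert (Hr2l1 : In r2 l1) by (apply mem_filter; auto).
      destruct (player1 r2 Hr2l1) as [z [Hz0 [HzZ [Hx [Hpi [Hpay [Hu Hbr]]]]]]].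
      assert (Hterm : vbar v B r2 (x r2) <= Ao).
      { unfold Ao. apply (sumR_term (fun i => vbar v B i (x i))); auto.
        intros i Hi. destruct (player1 i Hi) as [zi [_ [_ [Hxi _]]]].
        apply mem_filter in Hi as [Hi _]. apply vbar_nonneg; auto; lra. }
      destruct (Rle_dec (D/2) z) as [Hz|Hz].
      + assert (Hin1 : In 1%nat (seq 1 k)) by (apply in_seq; lia).
        pose proof (Fg_term k pr prpos 1 Z Hin1).
        assert (D/2 <= cc k 1 Z) by (apply cc_half; auto; fold D; simpl; lra).
        unfold pr in H. rewrite price_1 in H. fold V in H. fold pr R in H.
        nra.
      + apply Rnot_le_lt in Hz.
        assert (Hcost : cost v B n r1 z (D/2) <= V / 4 * (D / 2)).
        { unfold cost. rewrite !cum_eq. apply Fg_cost; auto; try lra.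
          intros j Hj Hlt. apply in_seq in Hj. destruct j as [|[|j]]; [lia| |].
          - unfold price_level. simpl. unfold V. lra.
          - exfalso. replace (S (S j) - 1)%nat with (S j) in Hlt by lia.
            assert (1 <= INR (S j)) by (apply (le_INR 1); lia). fold k D in Hlt. nra. }
        assert (Hcb : cost v B n r1 z (D/2) <= B r2) by nra.
        destruct Hbr as [_ [_ Hbr]].
        pose proof (Hbr (D/2) ltac:(lra) Hcb) as Hut.
        assert (Hch : v r2 (1/2) <= INR (S (2 * k - 1)) * v r2 (D/2)).
        { pose proof (val_chunk (v r2) (Hval r2 Hr2) (2 * k - 1) (D/2) ltac:(lra)) as Hv.
          replace (INR (S (2 * k - 1)) * (D / 2)) with (1/2) in Hv; [apply Hv; lra|].
          replace (S (2 * k - 1)) with (2 * k)%nat by lia. rewrite mult_INR. simpl. lra. }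
        replace (S (2 * k - 1)) with (2 * k)%nat in Hch by lia. rewrite mult_INR in Hch. simpl in Hch.
        assert (HvV2 : V2 <= v r2 (1/2)) by apply Rmin_l.
        assert (D * V2 <= v r2 (D/2)) by nra.
        assert (0 <= cost v B n r1 z (x r2)) by (apply costpos; auto; lra).
        assert (D * V2 / 2 <= vbar v B r2 (x r2)).
        { unfold vbar at 1. apply Rmin_glb; nra. }
        nra. }
    nra. Qed.

Lemma key2 w : welfare_values v B n w -> w <= 576 * log2 (INR n) ^ 2 * A.
Proof. intros [y [[Hy0 Hy1] Hw]]. rewrite Hw, lw_eq.
  destruct basic as [Hk1 [HD [HDp [HDle [HV [HV2 HV2B]]]]]].
  assert (Hkn : (1 <= k)%nat) by (apply INR_le; simpl; lra).
  destruct (log_facts n Hn) as [HL [_ Hk9]]. fold k in Hk9.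
  set (L := log2 (INR n)) in *.
  assert (HkL : INR k <= 9 * L ^ 2) by nra.
  pose proof key1 as HK1. pose proof A_ge as [HA1 [HA2 HA3]]. pose proof R_le_Ao as [HR0 [HR1 HR2]].
  pose proof Zbounds as HZ.
  change (fold_right Rplus 0 (map y (seq 0 n))) with (sumR y (seq 0 n)) in Hy1.
  assert (Hyr : forall i, (i < n)%nat -> 0 <= y i <= 1).
  { intros i Hi. split; auto. rewrite <- Hy1. apply sumR_term; [|apply in_seq; lia].
    intros j Hj. apply in_seq in Hj. apply Hy0; lia. }
  assert (Hvb : forall i, (i < n)%nat -> vbar v B i (y i) <= 2 * V).
  { intros i Hi. pose proof (vbar_two v B i (y i) (Hval i Hi) (HB i Hi) (Hyr i Hi)).
    pose proof (Hmax1 i Hi). unfold V. lra. }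
  destruct (Rle_dec Z (1/2 - D/2)) as [HcA|HcB].
  - set (P := 8 * INR k * R + V / 4).
    assert (HP : 0 <= P) by (unfold P; nra).
    assert (Hpl : forall i, In i l1 -> vbar v B i (y i) <= 8 * INR k * vbar v B i (x i) + P * y i).
    { intros i Hi. destruct (player1 i Hi) as [zi [Hz0 [HzZ [Hx [_ [_ [Hu _]]]]]]].
      apply mem_filter in Hi as [Hi _].
      destruct (chunk_exists (y i) (D/2) (Hyr i Hi) ltac:(lra)) as [N [HN1 HN2]].
      pose proof (pos_INR N) as HN0. rewrite S_INR in *.
      set (s := y i / (INR N + 1)).
      assert (Hsy : (INR N + 1) * s = y i) by (unfold s; field; lra).
      assert (Hs0 : 0 <= s) by (unfold s; apply Rmult_le_pos; [apply Hyr; auto| left; apply Rinv_0_lt_compat; lra]).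
      assert (Hst : s <= D / 2) by nra.
      pose proof (vbar_chunk v B i N s (Hval i Hi) (HB i Hi) Hs0) as Hch.
      rewrite S_INR in Hch. rewrite Hsy in Hch. specialize (Hch ltac:(pose proof (Hyr i Hi); lra)).
      pose proof (Hu s ltac:(lra)) as Hus.
      assert (Hcs : cost v B n r1 zi s <= P * s).
      { unfold cost. rewrite !cum_eq. fold k pr. apply Fg_cost; auto.
        intros j Hj Hlt. apply in_seq in Hj. destruct j as [|[|j]]; [lia| |].
        - unfold pr. rewrite price_1. fold V. unfold P. nra.
        - replace (S (S j) - 1)%nat with (S j) in Hlt by lia. fold D in Hlt.
          assert (Hin : In (S j) (seq 1 k)) by (apply in_seq; lia).
          pose proof (Fg_term k pr prpos (S j) Z Hin) as Ht. fold R in Ht.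
          assert (D/2 <= cc k (S j) Z) by (apply cc_half; auto; [lia|fold D; lra]).
          pose proof (prpos (S j)).
          assert (pr (S j) * (D/2) <= R) by nra.
          unfold pr in *. rewrite price_S. unfold P.
          assert (price_level v B r1 (S (S j)) = 2 * price_level v B r1 (S j)) by apply price_S.
          assert (2 * price_level v B r1 (S j) = 2 * price_level v B r1 (S j) * (2 * INR k * D)) by (rewrite HD; ring).
          nra. }
      assert (HvX : 0 <= vbar v B i (x i)) by (apply vbar_nonneg; auto; lra).
      assert (H4 : 2 / (D/2) = 8 * INR k) by (unfold D, dd; field; lra).
      rewrite H4 in HN1. assert ((INR N + 1) * vbar v B i (x i) <= 8 * INR k * vbar v B i (x i)) by (apply Rmult_le_compat_r; auto). assert ((INR N + 1) * vbar v B i s <= (INR N + 1) * (vbar v B i (x i) + P * s)) by (apply Rmult_le_compat_l; lra). nra. }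
    rewrite split_seq.
    pose proof (Hvb r1 Hr1).
    assert (Hs : sumR (fun i => vbar v B i (y i)) l1 <= 8 * INR k * Ao + P * sumR y l1).
    { unfold Ao. rewrite <- !sumR_scal, <- sumR_plus. apply sumR_le. exact Hpl. }
    rewrite split_seq in Hy1. pose proof (Hy0 r1 Hr1).
    assert (P * sumR y l1 <= P) by nra.
    assert (P <= 8 * INR k * A + V/4) by (unfold P; nra).
    nra.
  - apply Rnot_le_lt in HcB.
    assert (Hw2 : sumR (fun i => vbar v B i (y i)) (seq 0 n) <= INR n * (2 * V)).
    { rewrite <- (length_seq n 0) at 2. rewrite <- sumR_const. apply sumR_le.
      intros i Hi. apply in_seq in Hi. apply Hvb; lia. }
    assert (Hin : In k (seq 1 k)) by (apply in_seq; lia).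
    pose proof (Fg_term k pr prpos k Z Hin) as Ht. fold R in Ht.
    assert (D/2 <= cc k k Z) by (apply cc_half; auto; fold D; nra).
    pose proof (prpos k).
    assert (pr k * (D/2) <= R) by nra.
    unfold pr, price_level in H1. fold V in H1.
    pose proof (pow_fact n Hn) as Hpw. fold k in Hpw.
    assert (Hpk : 0 < 2 ^ k) by (apply pow_lt; lra).
    assert (2 ^ k * V = 2 ^ k * V * (2 * INR k * D)) by (rewrite HD; ring).
    assert (2 ^ k * V <= 32 * INR k * A) by nra.
    assert (INR n * (2 * V) <= 2 * (2 ^ k * V)) by nra.
    nra. Qed.

Lemma final Wopt : is_lub (welfare_values v B n) Wopt ->
  A >= Wopt / (576 * log2 (INR n) ^ 2).
Proof. intros [_ Hl]. destruct (log_facts n Hn) as [HL _].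
  assert (Hw : Wopt <= 576 * log2 (INR n) ^ 2 * A) by (apply Hl; intros w Hw; apply key2; auto).
  assert (Hc : 0 < 576 * log2 (INR n) ^ 2) by nra.
  apply Rle_ge. unfold Rdiv.
  apply Rle_trans with (576 * log2 (INR n) ^ 2 * A * / (576 * log2 (INR n) ^ 2)).
  - apply Rmult_le_compat_r; auto. left; apply Rinv_0_lt_compat; auto.
  - right. field. lra. Qed.

End Main.

Theorem mainTheorem18 :
  exists C : R, 0 < C /\
  forall (n : nat) (v : nat -> R -> R) (B : nat -> R),
    (2 <= n)%nat ->
    (forall i, (i < n)%nat -> valuation (v i)) ->
    (forall i, (i < n)%nat -> 0 < B i) ->
    forall (ord : list nat) (r1 r2 : nat) (x pi x' pi' : nat -> R),
      Permutation ord (seq 0 n) ->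
      (r1 < n)%nat ->
      (forall i, (i < n)%nat -> vbar v B i (1/2) <= vbar v B r1 (1/2)) ->
      (r2 < n)%nat -> r2 <> r1 ->
      (forall i, (i < n)%nat -> i <> r1 -> vbar v B i (1/2) <= vbar v B r2 (1/2)) ->
      sell_without v B n ord r1 x pi ->
      sell_without v B n ord r2 x' pi' ->
      forall Wopt : R,
        is_lub (welfare_values v B n) Wopt ->
        liquid_welfare v B n (ep_alloc v B r1 r2 x x' pi') >=
          Wopt / (C * (log2 (INR n)) ^ 2).
Proof.
  exists 576. split; [lra|].
  intros n v B Hn Hval HB ord r1 r2 x pi x' pi' Hperm Hr1 Hmax1 Hr2 Hne Hmax2 Hs1 Hs2 Wopt Hlub.
  eapply final; eassumption.
Qed.
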